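(* Let $S$ be a (small) category. Then $S$ is a left gcd-category (resp., a right gcd-category, resp., a gcd-category) if and only if its universal monoid $\mathrm{U_{mon}}(S)$ is a left gcd-monoid (resp., a right gcd-monoid, resp., a gcd-monoid).
   Context: Categories are viewed ''arrow-only'': a category is a set $S$ with a partial associative multiplication in which every arrow $x$ has a source identity $\mathrm{s}(x)$ and a target identity $\mathrm{t}(x)$ with $x=\mathrm{s}(x)x=x\,\mathrm{t}(x)$, and $xy$ is defined iff $\mathrm{t}(x)=\mathrm{s}(y)$; $\mathrm{Id}\,S$ denotes the set of identities. The universal monoid $\mathrm{U_{mon}}(S)$ is the monoid presented by generators $\varepsilon_S(x)$, $x\in S$, and relations $\varepsilon_S(e)=1$ for $e\in\mathrm{Id}\,S$ and $\varepsilon_S(x)\varepsilon_S(y)=\varepsilon_S(xy)$ whenever $xy$ is defined; $\varepsilon_S:S\to\mathrm{U_{mon}}(S)$ is the canonical functor (it is initial among functors from $S$ to monoids). A category $S$ is conical if $xy\in\mathrm{Id}\,S$ implies $x\in\mathrm{Id}\,S$. Left divisibility: $a\leqslant b$ iff $b=ax$ for some $x\in S$; right divisibility: $a\mathbin{\widetilde\leqslant} b$ iff $b=xa$ for some $x$. A left gcd of a set is a greatest lower bound for $\leqslant$, a right gcd a greatest lower bound for $\mathbin{\widetilde\leqslant}$. $S$ is a left gcd-category if it is conical, left cancellative ($ax=ay\Rightarrow x=y$), and any $a,b\in S$ with $\mathrm{s}(a)=\mathrm{s}(b)$ have a left gcd; right gcd-categories are defined dually (right cancellative, any $a,b$ with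 $\mathrm{t}(a)=\mathrm{t}(b)$ have a right gcd); a gcd-category is both. When $S$ is a monoid (a category with one identity $1$) these are called left gcd-monoid, right gcd-monoid, gcd-monoid. *)

(* Defs.v *)
From Stdlib Require Import List.
Import ListNotations.
Set Implicit Arguments.

(** A category is a type of arrows with a partial multiplication
    [mul x y], meaningful iff [tgt x = src y].  [src x], [tgt x] are the
    source / target identities of [x]. *)
Record Category := {
  arr :> Type;
  src : arr -> arr;
  tgt : arr -> arr;
  mul : arr -> arr -> arr;
  src_src : forall x, src (src x) = src x;
  tgt_src : forall x, tgt (src x) = src x;
  src_tgt : forall x, src (tgt x) = tgt x;
  tgt_tgt : forall x, tgt (tgt x) = tgt x;
  mul_src_l : forall x, mul (src x) x = x;
  mul_tgt_r : forall x, mul x (tgt x) = x;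
  src_mul : forall x y, tgt x = src y -> src (mul x y) = src x;
  tgt_mul : forall x y, tgt x = src y -> tgt (mul x y) = tgt y;
  mul_assoc : forall x y z, tgt x = src y -> tgt y = src z ->
    mul (mul x y) z = mul x (mul y z)
}.
Arguments src {c} _.
Arguments tgt {c} _.
Arguments mul {c} _ _.

Definition is_identity {S : Category} (e : S) : Prop := src e = e.

(** They are stated for a "partial magma up to an equivalence":
    carrier [T], equivalence [eqv] (equality of elements), definedness
    predicate [def x y] ("xy is defined"), product [m], identity
    predicate [isId], and "same source"/"same target" relations. *)
Section Generic.
Variables (T : Type) (eqv : T -> T -> Prop) (def : T -> T -> Prop)
  (m : T -> T -> T) (isId : T -> Prop).

Definition conical : Prop :=
  forall x y, def x y -> isId (m x y) -> isId x.

Definition left_cancellative : Prop :=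
  forall a x y, def a x -> def a y -> eqv (m a x) (m a y) -> eqv x y.

Definition right_cancellative : Prop :=
  forall a x y, def x a -> def y a -> eqv (m x a) (m y a) -> eqv x y.

Definition ldiv (a b : T) : Prop := exists x, def a x /\ eqv b (m a x).
Definition rdiv (a b : T) : Prop := exists x, def x a /\ eqv b (m x a).

Definition is_glb (le : T -> T -> Prop) (g a b : T) : Prop :=
  le g a /\ le g b /\ (forall h, le h a -> le h b -> le h g).

Definition is_left_gcd_struct (same_src : T -> T -> Prop) : Prop :=
  conical /\ left_cancellative /\
  (forall a b, same_src a b -> exists g, is_glb ldiv g a b).

Definition is_right_gcd_struct (same_tgt : T -> T -> Prop) : Prop :=
  conical /\ right_cancellative /\
  (forall a b, same_tgt a b -> exists g, is_glb rdiv g a b).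
End Generic.

Definition left_gcd_category (S : Category) : Prop :=
  is_left_gcd_struct (@eq S) (fun x y => tgt x = src y) (@mul S)
    (@is_identity S) (fun a b => src a = src b).

Definition right_gcd_category (S : Category) : Prop :=
  is_right_gcd_struct (@eq S) (fun x y => tgt x = src y) (@mul S)
    (@is_identity S) (fun a b => tgt a = tgt b).

Definition gcd_category (S : Category) : Prop :=
  left_gcd_category S /\ right_gcd_category S.

(** * The universal monoid U_mon(S), given by its presentation:
    elements are words over the generators eps_S(x), x in S, modulo the
    congruence generated by eps(e) = 1 (e identity) and
    eps(x) eps(y) = eps(xy) (xy defined).  The word [[x]] represents
    eps_S(x), concatenation is the product, [[]] is 1. *)
Section UmonCong.
Variable S : Category.
Inductive umon_cong : list S -> list S -> Prop :=
| uc_id : forall e : S, is_identity e -> umon_cong [e] []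
| uc_mul : forall x y : S, tgt x = src y -> umon_cong [x; y] [mul x y]
| uc_refl : forall w, umon_cong w w
| uc_sym : forall u v, umon_cong u v -> umon_cong v u
| uc_trans : forall u v w, umon_cong u v -> umon_cong v w -> umon_cong u w
| uc_app : forall u u' v v', umon_cong u u' -> umon_cong v v' ->
    umon_cong (u ++ v) (u' ++ v').
End UmonCong.
Arguments umon_cong {S} _ _.

(** gcd notions for U_mon(S), viewed as a category with one identity 1
    (every product defined, every pair has same source/target). *)
Definition umon_eqv (S : Category) := @umon_cong S.
Definition umon_isId (S : Category) (w : list S) : Prop := umon_cong w [].

Definition umon_left_gcd_monoid (S : Category) : Prop :=
  is_left_gcd_struct (@umon_eqv S) (fun _ _ => True) (@app S)
    (@umon_isId S) (fun _ _ => True).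

Definition umon_right_gcd_monoid (S : Category) : Prop :=
  is_right_gcd_struct (@umon_eqv S) (fun _ _ => True) (@app S)
    (@umon_isId S) (fun _ _ => True).

Definition umon_gcd_monoid (S : Category) : Prop :=
  umon_left_gcd_monoid S /\ umon_right_gcd_monoid S.

(* Main.v *)
Require Import Defs.
From Stdlib Require Import List Classical ClassicalEpsilon.
Import ListNotations.

Section NF.
Variable S : Category.

Lemma id_tgt (e : S) : is_identity e -> tgt e = e.
Proof. unfold is_identity; intro H. rewrite <- H at 1. rewrite tgt_src. exact H. Qed.
Arguments id_tgt {e}.
Lemma id_src_is (x : S) : is_identity (src x).
Proof. unfold is_identity. apply src_src. Qed.
Lemma id_tgt_is (x : S) : is_identity (tgt x).
Proof. unfold is_identity. apply src_tgt. Qed.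
Lemma mul_id_l (e y : S) : is_identity e -> tgt e = src y -> mul e y = y.
Proof. intros H1 H2. rewrite (id_tgt H1) in H2. subst e. apply mul_src_l. Qed.
Lemma mul_id_r (x e : S) : is_identity e -> tgt x = src e -> mul x e = x.
Proof. intros H1 H2. rewrite H1 in H2. subst e. apply mul_tgt_r. Qed.

Definition ins (x : S) (w : list S) : list S :=
  if excluded_middle_informative (is_identity x) then w else
  match w with
  | [] => [x]
  | y :: w' => if excluded_middle_informative (tgt x = src y) then
        (if excluded_middle_informative (is_identity (mul x y)) then w' else mul x y :: w')
      else x :: w
  end.
Arguments ins : simpl never.

Lemma ins_id x w : is_identity x -> ins x w = w.
Proof. intro H. unfold ins. destruct (excluded_middle_informative _); tauto. Qed.
Lemma ins_nil x : ~ is_identity x -> ins x [] = [x].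
Proof. intro H. unfold ins. destruct (excluded_middle_informative _); tauto. Qed.
Lemma ins_cc_id x y w : ~ is_identity x -> tgt x = src y -> is_identity (mul x y) -> ins x (y::w) = w.
Proof. intros H1 H2 H3. unfold ins. repeat destruct (excluded_middle_informative _); tauto. Qed.
Lemma ins_cc x y w : ~ is_identity x -> tgt x = src y -> ~ is_identity (mul x y) -> ins x (y::w) = mul x y :: w.
Proof. intros H1 H2 H3. unfold ins. repeat destruct (excluded_middle_informative _); tauto. Qed.
Lemma ins_nc x y w : ~ is_identity x -> tgt x <> src y -> ins x (y::w) = x :: y :: w.
Proof. intros H1 H2. unfold ins. repeat destruct (excluded_middle_informative _); tauto. Qed.

Fixpoint normal (w : list S) : Prop :=
  match w with
  | [] => True
  | x :: w' => ~ is_identity x /\ normal w' /\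
      match w' with [] => True | y :: _ => tgt x <> src y end
  end.

Lemma ins_normal x w : normal w -> normal (ins x w).
Proof.
  intro Hw. destruct (classic (is_identity x)) as [Hx|Hx]. rewrite ins_id; auto.
  destruct w as [|y w']. rewrite ins_nil; simpl; auto.
  destruct Hw as [Hy [Hw' Hh]].
  destruct (classic (tgt x = src y)) as [Hc|Hc].
  - destruct (classic (is_identity (mul x y))) as [Hi|Hi].
    + rewrite ins_cc_id; auto.
    + rewrite ins_cc; auto. simpl. split; [auto|split; [auto|]].
      destruct w' as [|z w'']; auto. rewrite tgt_mul; auto.
  - rewrite ins_nc; auto. simpl. auto.
Qed.

Lemma fold_normal u m : normal m -> normal (fold_right ins m u).
Proof. induction u; simpl; auto using ins_normal. Qed.

Definition nf (u : list S) := fold_right ins [] u.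
Lemma nf_normal u : normal (nf u).
Proof. apply fold_normal. simpl; auto. Qed.

Lemma key_xz (x y z : S) : tgt x = src y -> tgt y = src z ->
  is_identity (mul x y) -> is_identity (mul y z) -> x = z.
Proof.
  intros H1 H2 H3 H4.
  transitivity (mul x (mul y z)).
  - rewrite mul_id_r; auto. rewrite src_mul; auto.
  - rewrite <- mul_assoc; auto. apply mul_id_l; auto. rewrite tgt_mul; auto.
Qed.

Lemma fold_ins x n m : normal n -> normal m ->
  fold_right ins m (ins x n) = ins x (fold_right ins m n).
Proof.
  intros Hn Hm. destruct (classic (is_identity x)) as [Hx|Hx].
  { rewrite !ins_id; auto. }
  destruct n as [|y n']. { rewrite ins_nil; auto. }
  destruct Hn as [Hy [Hn' _]].
  assert (Hk : normal (fold_right ins m n')) by (apply fold_normal; auto).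
  destruct (classic (tgt x = src y)) as [Hc|Hc].
  - destruct (classic (is_identity (mul x y))) as [Hi|Hi].
    + rewrite (ins_cc_id _ _ _ Hx Hc Hi). cbn [fold_right].
      remember (fold_right ins m n') as k eqn:Ek. clear Ek.
      destruct k as [|z k'].
      * rewrite ins_nil; auto. rewrite ins_cc_id; auto.
      * destruct Hk as [Hz [Hk' Hh]].
        destruct (classic (tgt y = src z)) as [Hc2|Hc2].
        -- destruct (classic (is_identity (mul y z))) as [Hi2|Hi2].
           ++ rewrite ins_cc_id; auto. assert (x = z) by (eapply key_xz; eauto). subst z.
              destruct k' as [|w k'']. rewrite ins_nil; auto. rewrite ins_nc; auto.
           ++ rewrite ins_cc; auto.
              assert (E : mul x (mul y z) = z).
              { rewrite <- mul_assoc; auto. apply mul_id_l; auto. rewrite tgt_mul; auto. }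
              rewrite ins_cc; [|auto| rewrite src_mul; auto | rewrite E; auto]. rewrite E; auto.
        -- rewrite ins_nc; auto. rewrite ins_cc_id; auto.
    + rewrite (ins_cc _ _ _ Hx Hc Hi). cbn [fold_right].
      remember (fold_right ins m n') as k eqn:Ek. clear Ek.
      destruct k as [|z k'].
      * rewrite ins_nil; auto. rewrite ins_nil; auto. rewrite ins_cc; auto.
      * destruct Hk as [Hz [Hk' Hh]].
        destruct (classic (tgt y = src z)) as [Hc2|Hc2].
        -- destruct (classic (is_identity (mul y z))) as [Hi2|Hi2].
           ++ rewrite (ins_cc_id y z); auto.
              assert (E : mul (mul x y) z = x).
              { rewrite mul_assoc; auto. apply mul_id_r; auto. rewrite src_mul; auto. }
              rewrite ins_cc; [| auto | rewrite tgt_mul; auto | rewrite E; auto]. rewrite E.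
              destruct k' as [|w k'']. rewrite ins_nil; auto. rewrite ins_nc; auto.
              assert (tgt z = tgt x).
              { rewrite <- (tgt_mul _ y z); auto. rewrite (id_tgt Hi2). rewrite <- Hi2. rewrite src_mul; auto. }
              congruence.
           ++ rewrite (ins_cc y z); auto.
              assert (A : mul (mul x y) z = mul x (mul y z)) by (apply mul_assoc; auto).
              destruct (classic (is_identity (mul x (mul y z)))) as [Hi3|Hi3].
              ** rewrite (ins_cc_id (mul x y) z); [| auto | rewrite tgt_mul; auto | rewrite A; auto].
                 rewrite ins_cc_id; auto. rewrite src_mul; auto.
              ** rewrite (ins_cc (mul x y) z); [| auto | rewrite tgt_mul; auto | rewrite A; auto].
                 rewrite ins_cc; auto. rewrite A; auto. rewrite src_mul; auto.
        -- rewrite (ins_nc y); auto. rewrite (ins_cc x y); auto.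
           rewrite (ins_nc (mul x y)); auto. rewrite tgt_mul; auto.
  - rewrite ins_nc; auto.
Qed.

Lemma fold_nf u m : normal m -> fold_right ins m u = fold_right ins m (nf u).
Proof.
  intro Hm. induction u as [|x u IH]; auto. cbn [fold_right]. rewrite IH.
  unfold nf at 2. cbn [fold_right]. rewrite fold_ins; auto using nf_normal.
Qed.

Lemma nf_app u v : nf (u ++ v) = fold_right ins (nf v) (nf u).
Proof. unfold nf at 1. rewrite fold_right_app. apply fold_nf, nf_normal. Qed.

Lemma cong_nf u v : umon_cong u v -> nf u = nf v.
Proof.
  induction 1.
  - unfold nf; cbn [fold_right]. apply ins_id; auto.
  - unfold nf; cbn [fold_right].
    destruct (classic (is_identity y)) as [Hy|Hy].
    + rewrite (ins_id y); auto. rewrite mul_id_r; auto.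
    + rewrite (ins_nil y); auto. destruct (classic (is_identity x)) as [Hx|Hx].
      * rewrite ins_id; auto. rewrite mul_id_l; auto. rewrite ins_nil; auto.
      * destruct (classic (is_identity (mul x y))) as [Hi|Hi].
        -- rewrite ins_cc_id; auto. rewrite ins_id; auto.
        -- rewrite ins_cc; auto. rewrite ins_nil; auto.
  - auto.
  - auto.
  - congruence.
  - rewrite !nf_app. congruence.
Qed.

Lemma cong_ins x n : umon_cong (x :: n) (ins x n).
Proof.
  destruct (classic (is_identity x)) as [Hx|Hx].
  { rewrite ins_id; auto. exact (uc_app (uc_id Hx) (uc_refl _ n)). }
  destruct n as [|y n']. { rewrite ins_nil; auto. apply uc_refl. }
  destruct (classic (tgt x = src y)) as [Hc|Hc].
  - destruct (classic (is_identity (mul x y))) as [Hi|Hi].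
    + rewrite ins_cc_id; auto.
      apply uc_trans with ([mul x y] ++ n').
      * exact (uc_app (uc_mul _ _ _ Hc) (uc_refl _ n')).
      * exact (uc_app (uc_id Hi) (uc_refl _ n')).
    + rewrite ins_cc; auto. exact (uc_app (uc_mul _ _ _ Hc) (uc_refl _ n')).
  - rewrite ins_nc; auto. apply uc_refl.
Qed.

Lemma nf_cong w : umon_cong w (nf w).
Proof.
  induction w as [|x w IH]. apply uc_refl.
  unfold nf; cbn [fold_right]. fold (nf w).
  apply uc_trans with (x :: nf w).
  - exact (uc_app (uc_refl _ [x]) IH).
  - apply cong_ins.
Qed.

Lemma cong_iff u v : umon_cong u v <-> nf u = nf v.
Proof.
  split. apply cong_nf.
  intro E. apply uc_trans with (nf u). apply nf_cong. rewrite E. apply uc_sym, nf_cong.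
Qed.

Lemma nf_normal_id w : normal w -> nf w = w.
Proof.
  induction w as [|x w IH]; auto. intros [Hx [Hw Hh]].
  unfold nf; cbn [fold_right]. fold (nf w). rewrite IH; auto.
  destruct w as [|y w']. apply ins_nil; auto. apply ins_nc; auto.
Qed.

Lemma nf_single x : nf [x] = ins x [].
Proof. reflexivity. Qed.

Definition ldivS (p x : S) : Prop := exists r, tgt p = src r /\ x = mul p r.

Fixpoint Pref (g w : list S) : Prop :=
  match g, w with
  | [], _ => True
  | _ :: _, [] => False
  | p :: g', x :: w' => (p = x /\ Pref g' w') \/ (g' = [] /\ ldivS p x)
  end.

Lemma ldivS_refl p : ldivS p p.
Proof. exists (tgt p). split. symmetry; apply src_tgt. symmetry; apply mul_tgt_r. Qed.

Lemma Pref_head p g x w : Pref (p :: g) (x :: w) -> ldivS p x.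
Proof. simpl. intros [[E _]|[_ H]]; auto. subst; apply ldivS_refl. Qed.

Lemma ldivS_src p x : ldivS p x -> src p = src x.
Proof. intros [r [H1 H2]]. subst x. rewrite src_mul; auto. Qed.

Lemma Pref_nil g : Pref g [] -> g = [].
Proof. destruct g; simpl; tauto. Qed.

Definition conS : Prop := forall x y : S, tgt x = src y -> is_identity (mul x y) -> is_identity x.

Lemma Pref_mul (Hcon : conS) g m : normal g -> normal m -> Pref g (fold_right ins m g).
Proof.
  intros Hg Hm. induction g as [|p g IH]. simpl; auto.
  destruct Hg as [Hp [Hg Hh]].
  destruct g as [|q g''].
  - cbn [fold_right]. destruct m as [|z m'].
    + rewrite ins_nil; auto. simpl. auto.
    + destruct (classic (tgt p = src z)) as [Hc|Hc].
      * destruct (classic (is_identity (mul p z))) as [Hi|Hi].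
        -- exfalso. apply Hp. eapply Hcon; eauto.
        -- rewrite ins_cc; auto. simpl. right. split; auto. exists z; auto.
      * rewrite ins_nc; auto. simpl. auto.
  - specialize (IH Hg). cbn [fold_right] in IH |- *.
    remember (ins q (fold_right ins m g'')) as k eqn:Ek. clear Ek.
    destruct k as [|z k']. { simpl in IH. destruct IH. }
    assert (src q = src z) by (apply ldivS_src; eapply Pref_head; eauto).
    rewrite ins_nc; auto. 2: congruence.
    simpl. left. auto.
Qed.

Lemma Pref_intro g w : Pref g w -> exists h, umon_cong w (g ++ h).
Proof.
  revert w. induction g as [|p g IH]; intros w H.
  - exists w. apply uc_refl.
  - destruct w as [|x w']. destruct H. destruct H as [[E H]|[E [r [H1 H2]]]].
    + subst. destruct (IH _ H) as [h Hh]. exists h. exact (uc_app (uc_refl _ [x]) Hh).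
    + subst. exists (r :: w'). exact (uc_app (uc_sym (uc_mul _ _ _ H1)) (uc_refl _ w')).
Qed.

Definition ldivU (g w : list S) : Prop := exists x, True /\ umon_cong w (g ++ x).

Lemma LD (Hcon : conS) g w : ldivU g w <-> Pref (nf g) (nf w).
Proof.
  split.
  - intros [x [_ H]]. apply cong_nf in H. rewrite H, nf_app.
    apply Pref_mul; auto using nf_normal.
  - intro H. destruct (Pref_intro _ _ H) as [h Hh]. exists h. split; auto.
    apply uc_trans with (nf w). apply nf_cong.
    apply uc_trans with (nf g ++ h). auto.
    exact (uc_app (uc_sym (nf_cong g)) (uc_refl _ h)).
Qed.

Definition canS : Prop := forall a x y : S, tgt a = src x -> tgt a = src y -> mul a x = mul a y -> x = y.
Definition gcdS : Prop := forall a b : S, src a = src b ->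
  exists c, ldivS c a /\ ldivS c b /\ forall h, ldivS h a -> ldivS h b -> ldivS h c.

Lemma no_fix (Hcan : canS) (p z : S) : ~ is_identity z -> tgt p = src z -> mul p z = p -> False.
Proof.
  intros Hz Hc E. apply Hz. assert (z = tgt p).
  { apply (Hcan p); auto. symmetry; apply src_tgt. rewrite mul_tgt_r; auto. }
  subst. apply id_tgt_is.
Qed.

Lemma ins_form (Hcon : conS) (p : S) k : ~ is_identity p -> normal k ->
  (k = [] /\ ins p k = [p]) \/
  (exists z k', k = z :: k' /\ tgt p = src z /\ ~ is_identity z /\ ins p k = mul p z :: k') \/
  (exists z k', k = z :: k' /\ ins p k = p :: k).
Proof.
  intros Hp Hk. destruct k as [|z k']. left; split; auto; apply ins_nil; auto.
  right. destruct Hk as [Hz _].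
  destruct (classic (tgt p = src z)) as [Hc|Hc].
  - destruct (classic (is_identity (mul p z))) as [Hi|Hi].
    + exfalso; apply Hp; eapply Hcon; eauto.
    + left. exists z, k'. repeat split; auto. apply ins_cc; auto.
  - right. exists z, k'. split; auto. apply ins_nc; auto.
Qed.

Lemma ins_inj (Hcon : conS) (Hcan : canS) (p : S) k1 k2 : ~ is_identity p -> normal k1 -> normal k2 ->
  ins p k1 = ins p k2 -> k1 = k2.
Proof.
  intros Hp H1 H2 H.
  destruct (ins_form Hcon _ _ Hp H1) as [[E1 F1]|[[z1 [k1' [E1 [C1 [N1 F1]]]]]|[z1 [k1' [E1 F1]]]]];
  destruct (ins_form Hcon _ _ Hp H2) as [[E2 F2]|[[z2 [k2' [E2 [C2 [N2 F2]]]]]|[z2 [k2' [E2 F2]]]]];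
  rewrite F1, F2 in H; subst; try (injection H; intros; subst); auto;
  try (exfalso; eapply no_fix; eauto; fail);
  try discriminate.
  f_equal. eapply Hcan; eauto.
Qed.

Lemma fold_inj (Hcon : conS) (Hcan : canS) (a m1 m2 : list S) : normal a -> normal m1 -> normal m2 ->
  fold_right ins m1 a = fold_right ins m2 a -> m1 = m2.
Proof.
  intros Ha H1 H2. induction a as [|p a IH]; auto.
  destruct Ha as [Hp [Ha _]]. cbn [fold_right]. intro E.
  apply IH; auto. eapply ins_inj; eauto using fold_normal.
Qed.

Lemma Pref_src (p : S) g x w : Pref (p :: g) (x :: w) -> src p = src x.
Proof. intro H. apply ldivS_src. eapply Pref_head; eauto. Qed.

Lemma ldivS_trans (a b c : S) : ldivS a b -> ldivS b c -> ldivS a c.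
Proof.
  intros [r [H1 H2]] [s [H3 H4]]. subst. exists (mul r s).
  rewrite tgt_mul in H3; auto. split. rewrite src_mul; auto.
  apply mul_assoc; auto.
Qed.

Lemma id_ldiv_id (Hcon : conS) (p c : S) : ldivS p c -> is_identity c -> is_identity p.
Proof. intros [r [H1 H2]] Hc. subst. eapply Hcon; eauto. Qed.

Lemma gcd_exists (Hcon : conS) (Hg : gcdS) (u : list S) : forall v, normal u -> normal v ->
  exists g, normal g /\ Pref g u /\ Pref g v /\
    forall h, normal h -> Pref h u -> Pref h v -> Pref h g.
Proof.
  induction u as [|x u IH]; intros v Hu Hv.
  { exists []. repeat split; simpl; auto. }
  destruct v as [|y v].
  { exists []. repeat split; simpl; auto. }
  pose proof Hu as [Hx [Hu' Hhu]]. pose proof Hv as [Hy [Hv' Hhv]].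
  destruct (classic (x = y)) as [E|Nxy].
  - subst y. destruct (IH v Hu' Hv') as [g [Hgn [Hgu [Hgv Hgm]]]].
    exists (x :: g). split; [|split; [|split]].
    + simpl. split; auto. split; auto. destruct g as [|q g']; auto.
      destruct u as [|z u']. destruct Hgu. apply Pref_src in Hgu. congruence.
    + simpl; auto.
    + simpl; auto.
    + intros [|p h'] Hh H1 H2. simpl; auto.
      destruct H1 as [[E1 P1]|[E1 D1]]; destruct H2 as [[E2 P2]|[E2 D2]]; subst; simpl.
      * left. split; auto. apply Hgm; auto. destruct Hh as [_ [Hh _]]; auto.
      * right; split; auto.
      * right; split; auto; try apply ldivS_refl.
      * right; split; auto.
  - destruct (classic (src x = src y)) as [Es|Ns].
    + destruct (Hg x y Es) as [c [Cx [Cy Cm]]].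
      assert (Hsub : forall p h', Pref (p :: h') (x :: u) -> Pref (p :: h') (y :: v) -> ldivS p c).
      { intros p h' H1 H2. apply Cm; eapply Pref_head; eauto. }
      destruct (classic (is_identity c)) as [Ic|Ic].
      * exists []. repeat split; simpl; auto.
        intros [|p h'] Hh H1 H2. simpl; auto. exfalso. destruct Hh as [Hp _].
        apply Hp. eapply id_ldiv_id; eauto.
      * exists [c]. repeat split; simpl; auto.
        intros [|p h'] Hh H1 H2. simpl; auto.
        destruct h' as [|q h''].
        -- right. split; auto. eapply Hsub; eauto.
        -- exfalso. destruct H1 as [[E1 _]|[E1 _]]; [|discriminate].
           destruct H2 as [[E2 _]|[E2 _]]; [|discriminate]. congruence.
    + exists []. repeat split; simpl; auto.
      intros [|p h'] Hh H1 H2. simpl; auto. exfalso.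
      apply Pref_src in H1. apply Pref_src in H2. congruence.
Qed.

Lemma nf_single_nonid (x : S) : ~ is_identity x -> nf [x] = [x].
Proof. intro H. apply ins_nil; auto. Qed.
Lemma nf_single_id (x : S) : is_identity x -> nf [x] = [].
Proof. intro H. apply ins_id; auto. Qed.

Theorem left_to_umon : left_gcd_category S -> umon_left_gcd_monoid S.
Proof.
  unfold left_gcd_category, umon_left_gcd_monoid, is_left_gcd_struct.
  intros [Hcon [Hcan Hg]].
  assert (Hc : conS) by exact Hcon. assert (Hk : canS) by exact Hcan.
  assert (Hgs : gcdS).
  { intros a b E. destruct (Hg a b E) as [c Hc']. exists c. exact Hc'. }
  split; [|split].
  - unfold conical, umon_isId. intros x y _ H.
    assert (L : ldivU x []) by (exists y; split; auto; apply uc_sym; exact H).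
    apply (LD Hc) in L. apply Pref_nil in L. apply cong_iff. rewrite L. reflexivity.
  - unfold left_cancellative, umon_eqv. intros a x y _ _ H.
    apply cong_iff in H. rewrite !nf_app in H. apply cong_iff.
    eapply fold_inj; eauto using nf_normal.
  - intros a b _.
    destruct (gcd_exists Hc Hgs (nf a) (nf b) (nf_normal a) (nf_normal b))
      as [g [Gn [Ga [Gb Gm]]]].
    exists g. unfold is_glb. fold (ldivU g a). fold (ldivU g b).
    split; [|split].
    + apply (LD Hc). rewrite nf_normal_id; auto.
    + apply (LD Hc). rewrite nf_normal_id; auto.
    + intros h H1 H2. change (ldivU h g). change (ldivU h a) in H1. change (ldivU h b) in H2.
      apply (LD Hc) in H1. apply (LD Hc) in H2. apply (LD Hc).
      rewrite (nf_normal_id g Gn). apply Gm; auto using nf_normal.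
Qed.

Theorem umon_to_left : umon_left_gcd_monoid S -> left_gcd_category S.
Proof.
  unfold left_gcd_category, umon_left_gcd_monoid, is_left_gcd_struct.
  intros [Ucon [Ucan Ug]].
  assert (Hc : conS).
  { intros x y Hxy Hid.
    assert (H : umon_cong ([x] ++ [y]) []).
    { apply uc_trans with [mul x y]. apply uc_mul; auto. apply uc_id; auto. }
    apply (Ucon _ _ I) in H. apply cong_nf in H.
    destruct (classic (is_identity x)) as [Hx|Hx]; auto.
    rewrite nf_single_nonid in H; auto. discriminate. }
  split; [exact Hc|split].
  - unfold left_cancellative. intros a x y Hx Hy E.
    assert (H : umon_cong ([a] ++ [x]) ([a] ++ [y])).
    { apply uc_trans with [mul a x]. apply uc_mul; auto. rewrite E. apply uc_sym, uc_mul; auto. }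
    apply (Ucan _ _ _ I I) in H. apply cong_nf in H.
    destruct (classic (is_identity x)) as [Ix|Ix]; destruct (classic (is_identity y)) as [Iy|Iy].
    + unfold is_identity in Ix, Iy. congruence.
    + rewrite (nf_single_id x), (nf_single_nonid y) in H; auto. discriminate.
    + rewrite (nf_single_id y), (nf_single_nonid x) in H; auto. discriminate.
    + rewrite !nf_single_nonid in H; auto. congruence.
  - intros a b E.
    destruct (Ug [a] [b] I) as [g [Ga [Gb Gm]]].
    change (ldivU g [a]) in Ga. change (ldivU g [b]) in Gb.
    apply (LD Hc) in Ga. apply (LD Hc) in Gb.
    assert (Hsa : ldivS (src a) a).
    { exists a. split. apply tgt_src. symmetry; apply mul_src_l. }
    assert (Hsb : ldivS (src a) b).
    { rewrite E. exists b. split. apply tgt_src. symmetry; apply mul_src_l. }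
    assert (Hlift : forall h c, ldivS h c -> ldivU [h] [c]).
    { intros h c [r [H1 H2]]. exists [r]. split; auto. subst. apply uc_sym, uc_mul; auto. }
    assert (Pone : forall p c, Pref [p] (nf [c]) -> ldivS p c).
    { intros p c H. destruct (classic (is_identity c)) as [Ic|Ic].
      rewrite nf_single_id in H; auto. destruct H.
      rewrite nf_single_nonid in H; auto. eapply Pref_head; eauto. }
    remember (nf g) as n eqn:En.
    destruct n as [|p n'].
    + exists (src a). split; [auto|split; [auto|]].
      intros h H1 H2.
      destruct (classic (is_identity h)) as [Ih|Ih].
      * assert (src h = src a) by (apply ldivS_src; auto).
        unfold is_identity in Ih. rewrite Ih in H. subst. apply ldivS_refl.
      * exfalso. assert (L : ldivU [h] g).
        { apply Gm; apply Hlift; auto. }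
        apply (LD Hc) in L. rewrite nf_single_nonid, <- En in L; auto.
    + assert (n' = []).
      { destruct (classic (is_identity a)) as [Ia|Ia].
        rewrite nf_single_id in Ga; auto. destruct Ga.
        rewrite nf_single_nonid in Ga; auto.
        destruct n'; auto. destruct Ga as [[_ X]|[X _]]; [destruct X|discriminate]. }
      subst n'.
      exists p. split; [apply Pone; auto|split; [apply Pone; auto|]].
      intros h H1 H2.
      assert (L : ldivU [h] g) by (apply Gm; apply Hlift; auto).
      apply (LD Hc) in L. rewrite <- En in L.
      destruct (classic (is_identity h)) as [Ih|Ih].
      * assert (src h = src a) by (apply ldivS_src; auto).
        assert (src p = src a) by (apply ldivS_src; apply Pone; auto).
        unfold is_identity in Ih. rewrite Ih in H. subst h.
        rewrite <- H0. exists p. split. apply tgt_src. symmetry; apply mul_src_l.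
      * rewrite nf_single_nonid in L; auto. eapply Pref_head; eauto.
Qed.
End NF.

Definition op (S : Category) : Category.
Proof.
  refine (@Build_Category (arr S) (@tgt S) (@src S) (fun x y => mul y x) _ _ _ _ _ _ _ _ _).
  - apply tgt_tgt.
  - apply src_tgt.
  - apply tgt_src.
  - apply src_src.
  - apply mul_tgt_r.
  - apply mul_src_l.
  - intros x y H. apply tgt_mul. auto.
  - intros x y H. apply src_mul. auto.
  - intros x y z H1 H2. symmetry. apply mul_assoc; auto.
Defined.

Lemma is_id_op (S : Category) (e : S) : @is_identity (op S) e <-> is_identity e.
Proof.
  unfold is_identity; cbn. split; intro H.
  - rewrite <- H at 1. rewrite src_tgt; exact H.
  - rewrite <- H at 1. rewrite tgt_src; exact H.
Qed.

Lemma conical_swap (S : Category) :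
  (forall x y : S, tgt x = src y -> is_identity (mul x y) -> is_identity x) <->
  (forall x y : S, tgt x = src y -> is_identity (mul x y) -> is_identity y).
Proof.
  split; intros H x y Hxy Hi.
  - pose proof (H x y Hxy Hi) as Hx. rewrite mul_id_l in Hi; auto.
  - pose proof (H x y Hxy Hi) as Hy. rewrite mul_id_r in Hi; auto.
Qed.

Lemma glb_iff {T} (le1 le2 : T -> T -> Prop) g a b :
  (forall x y, le1 x y <-> le2 x y) -> (is_glb le1 g a b <-> is_glb le2 g a b).
Proof.
  intro E. unfold is_glb. split; intros [H1 [H2 H3]]; repeat split;
  try (apply E; auto); intros h Ha Hb; apply E; apply H3; apply E; auto.
Qed.

Lemma right_op (S : Category) : right_gcd_category S <-> left_gcd_category (op S).
Proof.
  unfold right_gcd_category, left_gcd_category, is_right_gcd_struct, is_left_gcd_struct,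
    conical, left_cancellative, right_cancellative.
  assert (Ediv : forall g a : S, rdiv eq (fun x y : S => tgt x = src y) mul g a <->
      ldiv eq (fun x y : op S => tgt x = src y) mul g a).
  { intros g a. unfold rdiv, ldiv; cbn. split; intros [x [H1 H2]]; exists x; split; auto. }
  split.
  - intros [Hc [Hk Hg]]. split; [|split].
    + intros x y Hxy Hi. apply is_id_op. apply is_id_op in Hi. cbn in Hxy, Hi.
      apply (proj1 (conical_swap S) Hc y x); auto.
    + intros a x y H1 H2 E. cbn in *. apply (Hk a); auto.
    + intros a b E. cbn in E. destruct (Hg a b E) as [g Hgl]. exists g.
      apply (glb_iff _ _ _ _ _ Ediv). auto.
  - intros [Hc [Hk Hg]]. split; [|split].
    + apply (proj2 (conical_swap S)). intros x y Hxy Hi.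
      apply is_id_op. apply (Hc y x); cbn; auto. apply is_id_op; auto.
    + intros a x y H1 H2 E. apply (Hk a); cbn; auto.
    + intros a b E. destruct (Hg a b E) as [g Hgl]. exists g.
      apply (glb_iff _ _ _ _ _ Ediv). auto.
Qed.

Lemma cong_op_to (S : Category) (u v : list S) :
  @umon_cong (op S) u v -> umon_cong (rev u) (rev v).
Proof.
  induction 1.
  - apply uc_id. apply is_id_op; auto.
  - cbn in *. apply uc_mul. auto.
  - apply uc_refl.
  - apply uc_sym; auto.
  - eapply uc_trans; eauto.
  - rewrite !rev_app_distr. exact (uc_app IHumon_cong2 IHumon_cong1).
Qed.

Lemma cong_op_from (S : Category) (u v : list S) :
  umon_cong u v -> @umon_cong (op S) (rev u) (rev v).
Proof.
  induction 1.
  - apply (@uc_id (op S)). apply is_id_op; auto.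
  - cbn. apply (uc_mul (op S) y x). cbn. auto.
  - apply uc_refl.
  - apply uc_sym; auto.
  - eapply uc_trans; eauto.
  - rewrite !rev_app_distr. exact (uc_app IHumon_cong2 IHumon_cong1).
Qed.

Lemma cong_op_iff (S : Category) (u v : list S) :
  @umon_cong (op S) u v <-> umon_cong (rev u) (rev v).
Proof.
  split. apply cong_op_to. intro H. apply cong_op_from in H. rewrite !rev_involutive in H. auto.
Qed.

Lemma cong_op_iff' (S : Category) (u v : list S) :
  @umon_cong (op S) (rev u) (rev v) <-> umon_cong u v.
Proof. rewrite cong_op_iff, !rev_involutive. tauto. Qed.

Lemma umon_con2 (S : Category) :
  (forall x y : list S, umon_cong (x ++ y) [] -> umon_cong x []) ->
  forall x y : list S, umon_cong (x ++ y) [] -> umon_cong y [].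
Proof.
  intros H x y Hxy. pose proof (H x y Hxy) as Hx.
  apply uc_trans with (x ++ y); auto.
  change y with ([] ++ y) at 1. apply uc_app. apply uc_sym; auto. apply uc_refl.
Qed.

Lemma umon_right_op (S : Category) : umon_right_gcd_monoid S <-> umon_left_gcd_monoid (op S).
Proof.
  unfold umon_right_gcd_monoid, umon_left_gcd_monoid, is_right_gcd_struct, is_left_gcd_struct,
    conical, left_cancellative, right_cancellative, umon_isId, umon_eqv.
  assert (LR : forall (h a : list S), ldiv (@umon_cong (op S)) (fun _ _ => True) (@app _) h a <->
      rdiv (@umon_cong S) (fun _ _ => True) (@app _) (rev h) (rev a)).
  { intros h a. unfold ldiv, rdiv. split.
    - intros [x [_ H]]. exists (rev x). split; auto. apply cong_op_iff in H.
      rewrite rev_app_distr in H. auto.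
    - intros [x [_ H]]. exists (rev x). split; auto. apply cong_op_iff.
      rewrite rev_app_distr, rev_involutive. auto. }
  split.
  - intros [Hc [Hk Hg]]. split; [|split].
    + intros x y _ H. apply cong_op_iff in H. apply cong_op_iff.
      rewrite rev_app_distr in H. eapply umon_con2; [|exact H]. intros; eapply Hc; eauto.
    + intros a x y _ _ H. apply cong_op_iff in H. apply cong_op_iff.
      rewrite !rev_app_distr in H. eapply Hk; eauto.
    + intros a b _. destruct (Hg (rev a) (rev b) I) as [g [G1 [G2 G3]]].
      exists (rev g). split; [|split].
      * apply LR. rewrite rev_involutive; auto.
      * apply LR. rewrite rev_involutive; auto.
      * intros h H1 H2. apply LR. rewrite rev_involutive. apply G3; apply LR; auto.
  - intros [Hc [Hk Hg]]. split; [|split].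
    + intros x y _ H. apply cong_op_iff'. apply cong_op_iff' in H.
      rewrite rev_app_distr in H. eapply (umon_con2 (op S)); [|exact H]. intros; eapply Hc; eauto.
    + intros a x y _ _ H. apply cong_op_iff'. apply cong_op_iff' in H.
      rewrite !rev_app_distr in H. eapply Hk; eauto.
    + intros a b _. destruct (Hg (rev a) (rev b) I) as [g [G1 [G2 G3]]].
      exists (rev g). apply LR in G1. apply LR in G2. rewrite rev_involutive in G1, G2.
      split; [auto|split; [auto|]].
      intros h H1 H2. rewrite <- (rev_involutive h) in H1, H2 |- *.
      rewrite <- (rev_involutive a) in H1. rewrite <- (rev_involutive b) in H2.
      apply LR in H1. apply LR in H2. apply LR. auto.
Qed.

Theorem theorem5p9 (S : Category) :
  (left_gcd_category S <-> umon_left_gcd_monoid S) /\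
  (right_gcd_category S <-> umon_right_gcd_monoid S) /\
  (gcd_category S <-> umon_gcd_monoid S).
Proof.
  assert (L : forall T : Category, left_gcd_category T <-> umon_left_gcd_monoid T).
  { intro T. split. apply left_to_umon. apply umon_to_left. }
  assert (R : right_gcd_category S <-> umon_right_gcd_monoid S).
  { rewrite right_op, umon_right_op. apply L. }
  split; [apply L|split; [exact R|]].
  unfold gcd_category, umon_gcd_monoid. rewrite (L S), R. tauto.
Qed.
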